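(* Let $n, l$ be positive integers and $p$ a prime such that $p^l$ divides $n$ but $p^{l+1}$ does not divide $n$. Let $S \subseteq \mathbb{Z}_n$ with $0 \notin S$, $S=-S$, $|S| = p^l - 1$, such that the circulant graph $\mathrm{Cay}(\mathbb{Z}_n,S)$ is connected. Then $\mathrm{Cay}(\mathbb{Z}_n,S)$ admits a perfect code if and only if $s \not\equiv s' \pmod{p^l}$ for all distinct $s, s' \in S \cup \{0\}$.
   Context: $\mathbb{Z}_n$ is the additive group of integers modulo $n$; elements are identified with integers in $\{0,1,\dots,n-1\}$ (since $p^l \mid n$, congruence modulo $p^l$ is well defined on $\mathbb{Z}_n$). For an inverse-closed subset $S$ of $\mathbb{Z}_n$ not containing $0$, the circulant graph $\mathrm{Cay}(\mathbb{Z}_n,S)$ has vertex set $\mathbb{Z}_n$, with $u,v$ adjacent iff $v-u\in S$; its degree is $|S|$. A perfect code in a graph $\Gamma=(V,E)$ is a subset $C\subseteq V$ that is an independent set such that every vertex of $V\setminus C$ is adjacent to exactly one vertex of $C$. *)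

(* Defs.v *)
From mathcomp Require Import all_boot.
Set Implicit Arguments. Unset Strict Implicit. Unset Printing Implicit Defensive.

(* Z_n is modelled by 'I_n: elements are the integers 0..n-1,
   addition/negation are taken modulo n. *)

Definition zneg (n : nat) (x : 'I_n) : nat := (n - x) %% n.

Definition inv_closed (n : nat) (S : {set 'I_n}) : Prop :=
  forall s : 'I_n, s \in S -> exists2 t : 'I_n, t \in S & val t = zneg s.

Definition cay_adj (n : nat) (S : {set 'I_n}) : rel 'I_n :=
  fun u v => [exists s in S, val v == (u + s) %% n].

Definition cay_connected (n : nat) (S : {set 'I_n}) : Prop :=
  forall u v : 'I_n, connect (cay_adj S) u v.

Definition perfect_code (n : nat) (S : {set 'I_n}) (C : {set 'I_n}) : Prop :=
  (forall u v : 'I_n, u \in C -> v \in C -> ~~ cay_adj S u v) /\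
  (forall v : 'I_n, v \notin C -> #|[set c in C | cay_adj S v c]| = 1).

(* Main.v *)
Require Import Defs.
From mathcomp Require Import all_boot fingroup action ssralg zmodp pgroup sylow.
From mathcomp Require Import zify.
Set Implicit Arguments. Unset Strict Implicit. Unset Printing Implicit Defensive.
Set Warnings "-ambiguous-paths -notation-overridden".
Import GRing.Theory.

Section A.
Variables (k n : nat).
Definition rot (t : {ffun 'I_k.+1 -> 'I_n}) (a : 'I_k.+1) : {ffun 'I_k.+1 -> 'I_n} :=
  [ffun i : 'I_k.+1 => t (i + a)%R].
Lemma rot1 : rot^~ 1%g =1 id.
Proof. move=> t; apply/ffunP => i; rewrite ffunE /=. by rewrite addr0. Qed.
Lemma rotM t : act_morph rot t.
Proof. move=> a b; apply/ffunP => i; rewrite !ffunE. congr (t _).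
rewrite -addrA (addrC b); reflexivity. Qed.
Definition rot_action := TotalAction rot1 rotM.
End A.

Lemma addsubmod n x d : d <= n -> x + (n - d) + d = x %[mod n].
Proof. by move=> hd; rewrite -addnA subnK // modnDr. Qed.

Lemma mod_sub n a b c : 0 < n -> a + b = c %[mod n] -> a = c + (n - b %% n) %[mod n].
Proof.
move=> n0 H; have hb : b %% n <= n := ltnW (ltn_pmod b n0).
apply/eqP; rewrite -(eqn_modDr (b %% n)) -addnA subnK // modnDr modnDmr H.
done.
Qed.

Section Count.
Variables (n k : nat) (C D : {set 'I_n}).
Hypothesis n0 : 0 < n.
Definition Rr (v : nat) (c : 'I_n) : bool := [exists d in D, c == v + d %[mod n]].
Hypothesis hex : forall v, exists2 c, c \in C & Rr v c.
Hypothesis huniq : forall v c c', c \in C -> c' \in C -> Rr v c -> Rr v c' -> c = c'.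
Variable r : nat.
Definition sumt (t : {ffun 'I_k.+1 -> 'I_n}) := \sum_(i < k.+1) val (t i).
Definition X := [set t : {ffun 'I_k.+1 -> 'I_n} |
  [forall i, t i \in C] && [exists d in D, sumt t == r + d %[mod n]]].

Lemma cardX : #|X| = #|C| ^ k.
Proof.
pose g (t : {ffun 'I_k.+1 -> 'I_n}) : {ffun 'I_k -> 'I_n} :=
  [ffun i : 'I_k => t (widen_ord (leqnSn k) i)].
have sumE t : sumt t = \sum_(i < k) val (g t i) + t ord_max.
  by rewrite /sumt big_ord_recr /=; under [in RHS]eq_bigr do rewrite ffunE.
have wl (j : 'I_k) : widen_ord (leqnSn k) j = lift ord_max j.
  by apply: val_inj; rewrite /= /bump leqNgt ltn_ord.
have ginj : {in X &, injective g}.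
  move=> t t' /setIdP[/forallP Ct /existsP[d /andP[Dd Ed]]].
  move=> /setIdP[/forallP Ct' /existsP[d' /andP[Dd' Ed']]] eg.
  apply/ffunP => i.
  case: (unliftP ord_max i) => [j ->|->].
    by move/ffunP: eg => /(_ j); rewrite !ffunE wl.
  set v := r + (n - (\sum_(i<k) val (g t i)) %% n).
  apply: (huniq (v:=v)) => //.
    apply/existsP; exists d; rewrite Dd /=; apply/eqP; rewrite /v addnAC; apply: mod_sub => //.
    by rewrite addnC -sumE; apply/eqP.
  apply/existsP; exists d'; rewrite Dd' /=; apply/eqP; rewrite /v eg addnAC; apply: mod_sub => //.
  by rewrite addnC -sumE; apply/eqP.
rewrite -(card_in_imset ginj) -[k in _ ^ k]card_ord -card_ffun_on.
apply: eq_card => u; apply/imsetP/ffun_onP.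
  by case=> t /setIdP[/forallP Ct _] -> i; rewrite ffunE; apply: Ct.
move=> Cu; set s := \sum_(i<k) val (u i).
have [c Cc Rc] := hex (r + (n - s %% n)).
pose t := [ffun i => if unlift ord_max i is Some j then u j else c].
have gt : g t = u.
  by apply/ffunP => j; rewrite !ffunE wl liftK.
exists t; last by rewrite gt.
rewrite inE; apply/andP; split.
  by apply/forallP => i; rewrite ffunE; case: unliftP.
case/existsP: Rc => d /andP[Dd Ed]; apply/existsP; exists d; rewrite Dd /=.
rewrite sumE gt.
have -> : t ord_max = c by rewrite ffunE unlift_none.
rewrite -modnDml -modnDmr (eqP Ed) modnDmr.
have hs : s %% n <= n := ltnW (ltn_pmod s n0).
move: (s %% n) hs => x hx.
have -> : x + (r + (n - x) + d) = r + d + n by lia.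
by rewrite modnDr.
Qed.

Lemma fix_exists p : prime p -> p.-nat k.+1 -> ~~ (p %| #|C|) ->
  exists2 c, c \in C & [exists d in D, k.+1 * c == r + d %[mod n]].
Proof.
move=> pp pk npC.
have acts : [acts [set: 'I_k.+1], on X | rot_action k n].
  apply/subsetP => a _; apply/astabsP => t /=; rewrite !inE.
  have -> : sumt (rot t a) = sumt t.
    rewrite /sumt [RHS](reindex_inj (addIr a)); apply: eq_bigr => i _; by rewrite ffunE.
  congr (_ && _).
  apply/forallP/forallP => H i; last by rewrite ffunE; apply: H.
  by have := H (i - a)%R; rewrite ffunE subrK.
have pG : (p.-group [set: 'I_k.+1])%g by rewrite /pgroup cardsT card_ord.
have := pgroup_fix_mod pG acts; rewrite cardX.
case: (set_0Vmem ('Fix_(X | rot_action k n)([set: 'I_k.+1]))%g) => [->|[t]].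
  rewrite cards0 mod0n => H; exfalso.
  have : p %| #|C| ^ k by rewrite /dvdn; apply/eqP.
  by rewrite Euclid_dvdX // (negbTE npC).
move=> /setIP[tX /afixP fixt] _.
case/setIdP: tX => /forallP Ct /existsP[d /andP[Dd Ed]].
exists (t 0%R); first exact: Ct.
apply/existsP; exists d; rewrite Dd /=.
have <- : sumt t = k.+1 * t 0%R.
  rewrite /sumt (eq_bigr (fun _ => val (t 0%R))); last first.
    move=> i _; have := fixt i (in_setT i).
    by move/ffunP => /(_ 0%R); rewrite ffunE add0r => ->.
  by rewrite sum_nat_const card_ord.
exact: Ed.
Qed.
End Count.

Theorem theorem1p2 (n l p : nat) (S : {set 'I_n}) :
  0 < n -> 0 < l -> prime p ->
  p ^ l %| n -> ~~ (p ^ l.+1 %| n) ->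
  (forall s : 'I_n, s \in S -> val s != 0) ->
  inv_closed S ->
  #|S| = p ^ l - 1 ->
  cay_connected S ->
  (exists C : {set 'I_n}, perfect_code S C) <->
  (forall s s' : nat, (s \in 0 :: [seq val x | x in S]) ->
     (s' \in 0 :: [seq val x | x in S]) -> s != s' -> s != s' %[mod p ^ l]).
Proof.
move=> n0 l0 pp qn nq Snz invS cardS conn.
set q := p ^ l in qn nq cardS *.
have q0 : 0 < q by rewrite expn_gt0 prime_gt0.
pose zero : 'I_n := Ordinal n0.
pose D := [set x : 'I_n | (val x == 0) || (x \in S)].
have zD : zero \in D by rewrite inE eqxx.
have SD x : x \in S -> x \in D by move=> xS; rewrite inE xS orbT.
have cardD : #|D| = q.
  have -> : D = zero |: S.
    apply/setP => x; rewrite !inE; congr (_ || _).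
  rewrite cardsU1 cardS.
  have -> : (zero \notin S) by apply/negP => /Snz.
  by rewrite add1n subn1 prednK.
pose f (x : 'I_n) : 'I_q := Ordinal (ltn_pmod x q0).
have memE s : (s \in 0 :: [seq val x | x in S]) <-> exists2 x, x \in D & s = val x.
  rewrite in_cons; split.
    case/orP => [/eqP->|/imageP[x xS ->]]; first by exists zero.
    by exists x => //; apply: SD.
  case=> x; rewrite inE => /orP[/eqP <- ->|xS ->]; first by rewrite eqxx.
  by rewrite (image_f (fun x : 'I_n => val x) xS) orbT.
have rhsE : (forall s s' : nat, (s \in 0 :: [seq val x | x in S]) ->
     (s' \in 0 :: [seq val x | x in S]) -> s != s' -> s != s' %[mod q])
    <-> {in D &, injective f}.
  split.
    move=> H x y xD yD fxy; apply/eqP; apply: contraT => nxy.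
    have hx : val x \in 0 :: [seq val x | x in S] by apply/memE; exists x.
    have hy : val y \in 0 :: [seq val x | x in S] by apply/memE; exists y.
    have := H _ _ hx hy nxy.
    by move/(congr1 val): fxy => /= ->; rewrite eqxx.
  move=> inj s s' /memE[x xD ->] /memE[y yD ->] nxy; apply/negP => /eqP e.
  have : f x = f y by apply: val_inj.
  by move/inj => /(_ xD yD) exy; move: nxy; rewrite exy eqxx.
rewrite rhsE.
split.
  case=> C [indep card1].
  pose w (v : nat) : 'I_n := Ordinal (ltn_pmod v n0).
  have adjE v c : Rr D v c = (c == w v) || cay_adj S (w v) c.
    apply/existsP/orP.
      case=> d /andP[]; rewrite inE => /orP[d0|dS] Ed.
        left; apply/eqP/val_inj; rewrite /= -(modn_small (ltn_ord c)) (eqP Ed).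
        by rewrite (eqP d0) addn0.
      right; apply/existsP; exists d; rewrite dS /=.
      by rewrite -(modn_small (ltn_ord c)) (eqP Ed) modnDml.
    case=> [/eqP->|/existsP[s /andP[sS /eqP Es]]].
      by exists zero; rewrite zD /= addn0 modn_mod.
    by exists s; rewrite SD //= Es modn_mod modnDml.
  have hex v : exists2 c, c \in C & Rr D v c.
    case: (boolP (w v \in C)) => wC.
      by exists (w v) => //; rewrite adjE eqxx.
    have /eqP/cards1P[c hc] := card1 _ wC.
    have : c \in [set c in C | cay_adj S (w v) c] by rewrite hc set11.
    rewrite inE => /andP[cC adj]; exists c => //.
    by rewrite adjE adj orbT.
  have huniq v c c' : c \in C -> c' \in C -> Rr D v c -> Rr D v c' -> c = c'.
    move=> cC c'C; rewrite !adjE.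
    case/orP=> [/eqP e1|a1]; case/orP=> [/eqP e2|a2].
    - by rewrite e1 e2.
    - by have := indep _ _ cC c'C; rewrite e1 a2.
    - by have := indep _ _ c'C cC; rewrite e2 a1.
    case: (boolP (w v \in C)) => wC.
      by have := indep _ _ wC cC; rewrite a1.
    have /eqP/cards1P[x hx] := card1 _ wC.
    have hc : c \in [set c in C | cay_adj S (w v) c] by rewrite inE cC a1.
    have hc' : c' \in [set c in C | cay_adj S (w v) c] by rewrite inE c'C a2.
    by move: hc hc'; rewrite hx => /set1P -> /set1P ->.
  pose h (cd : 'I_n * 'I_n) : 'I_n := Ordinal (ltn_pmod (cd.1 + (n - cd.2)) n0).
  have hkey (c d : 'I_n) : val c = h (c, d) + d %[mod n].
    by rewrite /= modnDml addsubmod // ltnW.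
  have hinj : {in setX C D &, injective h}.
    move=> [c d] [c' d'] /setXP[cC dD] /setXP[c'C d'D] eh.
    have e1 : c = c'.
      apply: (huniq (h (c, d))) => //; apply/existsP; [exists d | exists d'];
        apply/andP; split => //; apply/eqP; [exact: hkey | rewrite eh; exact: hkey].
    subst c'; congr pair; apply: val_inj.
    have := hkey c d; rewrite eh (hkey c d') => /eqP; rewrite eqn_modDl => /eqP.
    by rewrite !modn_small.
  have hsurj : h @: setX C D = setT.
    apply/setP => v; rewrite inE; apply/imsetP.
    have [c cC /existsP[d /andP[dD Ed]]] := hex v.
    exists (c, d); first by rewrite inE cC dD.
    apply: val_inj; rewrite /= -(modn_small (ltn_ord v)).
    rewrite -modnDml (eqP Ed) modnDml -addnA subnKC ?modnDr //.
    exact: ltnW.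
  have Cq : #|C| * q = n.
    by rewrite -cardD -cardsX -(card_in_imset hinj) hsurj cardsT card_ord.
  have npC : ~~ (p %| #|C|).
    apply/negP => pC.
    have : p ^ l * p %| q * #|C| by rewrite dvdn_mul.
    by rewrite -expnSr mulnC Cq (negbTE nq).
  have hsur (y : 'I_q) : exists2 x, x \in D & f x = y.
    have kq : q.-1.+1 = q by rewrite prednK.
    have pk : p.-nat q.-1.+1 by rewrite kq pnatX pnat_id.
    have [c cC /existsP[d /andP[dD /eqP Ed]]] :=
      @fix_exists n q.-1 C D n0 hex huniq (q - y) p pp pk npC.
    rewrite kq in Ed.
    have := congr1 (modn^~ q) Ed; rewrite !modn_dvdm // mulnC modnMl => E'.
    exists d => //; apply: val_inj => /=.
    have -> : val d %% q = (d + q) %% q by rewrite modnDr.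
    have -> : d + q = (q - y + d) + y.
      by rewrite addnAC subnK 1?addnC // ltnW.
    by rewrite -modnDml -E' add0n modn_small.
  apply/imset_injP; rewrite cardD.
  have -> : f @: D = setT.
    apply/setP => y; rewrite inE; apply/imsetP.
    by have [x xD <-] := hsur y; exists x.
  by rewrite cardsT card_ord.
move=> inj.
have hsurj : f @: D = setT.
  apply/eqP; rewrite eqEcard subsetT cardsT card_ord (card_in_imset inj) cardD.
  by rewrite leqnn.
have hsur (y : 'I_q) : exists2 x, x \in D & f x = y.
  have : y \in f @: D by rewrite hsurj inE.
  by case/imsetP => x xD ->; exists x.
pose C := [set x : 'I_n | q %| x].
have dvmod m : (q %| m %% n) = (q %| m) by rewrite /dvdn modn_dvdm.
exists C; split.
  move=> u v; rewrite !inE => qu qv; apply/negP => /existsP[s /andP[sS /eqP Es]].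
  move: qv; rewrite Es dvmod dvdn_addr // => qs.
  have : f s = f zero by apply: val_inj; rewrite /= mod0n; apply/eqP.
  move/inj => /(_ (SD _ sS) zD) e; move: (Snz _ sS); rewrite e eqxx.
  by [].
move=> v; rewrite inE => nqv.
pose y : 'I_q := Ordinal (ltn_pmod (q - v %% q) q0).
have [d dD fd] := hsur y.
have hd : q %| v + d.
  have : val d %% q = (q - v %% q) %% q by move/(congr1 val): fd.
  move=> E; rewrite /dvdn -modnDmr E modnDmr -modnDml subnKC ?modnn //.
  by apply: ltnW; rewrite ltn_pmod.
have dS : d \in S.
  move: dD; rewrite inE => /orP[/eqP d0|//].
  by move: hd; rewrite d0 addn0 (negbTE nqv).
pose c0 : 'I_n := Ordinal (ltn_pmod (v + d) n0).
apply/eqP/cards1P; exists c0; apply/setP => c; rewrite !inE.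
apply/andP/eqP.
  case=> qc /existsP[s /andP[sS /eqP Es]].
  have qs : q %| v + s by rewrite -dvmod -Es.
  have : f s = f d.
    apply: val_inj => /=; apply/eqP; rewrite -(eqn_modDl v).
    by move: qs hd; rewrite /dvdn => /eqP -> /eqP ->.
  move/inj => /(_ (SD _ sS) dD) esd.
  by apply: val_inj; rewrite Es esd.
move=> ->; split; first by rewrite /= dvmod.
by apply/existsP; exists d; rewrite dS /=.
Qed.
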